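(* Let $G$ be a $(k+1)$-critical hypergraph with $k\ge2$, and let $S\subseteq V(G)$ be a separating vertex set of $G$ with $|S|\le2$. Then $S=\{v,w\}$ consists of two distinct vertices, $S$ is independent in $G$ (i.e. $\{v,w\}\notin E(G)$), and $G\div S$ has exactly two components $H_1$ and $H_2$. Moreover, letting $G_i=G[V(H_i)\cup S]$ for $i\in\{1,2\}$, the notation can be chosen so that some $k$-coloring $\varphi_1$ of $G_1$ satisfies $\varphi_1(v)=\varphi_1(w)$, and then: (a) every $k$-coloring $\varphi$ of $G_1$ satisfies $\varphi(v)=\varphi(w)$, and every $k$-coloring $\varphi$ of $G_2$ satisfies $\varphi(v)\ne\varphi(w)$; (b) the hypergraph $G_1+vw$ obtained from $G_1$ by adding the ordinary edge $vw$ is $(k+1)$-critical; (c) the hypergraph obtained from $G_2$ by identifying $v$ and $w$ into a single new vertex is $(k+1)$-critical.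
   Context: A hypergraph is a pair $G=(V,E)$ of finite sets with $E\subseteq 2^V$ and $|e|\ge2$ for all $e\in E$ (no multiple edges). A $k$-coloring is a map $V(G)\to\{1,\dots,k\}$ such that every edge contains two vertices of different colors; $\chi$ is the chromatic number. $G$ is $(k+1)$-critical if $\chi(G)=k+1$ but $\chi(H)\le k$ for every proper subhypergraph $H$. For $X\subseteq V(G)$: $G[X]$ has vertex set $X$ and the edges of $G$ contained in $X$; $G(X)$ has vertex set $X$ and edge set $\{e\cap X: e\in E(G), |e\cap X|\ge2\}$; $G\div S=G(V(G)\setminus S)$. Components are maximal connected subhypergraphs (connected: any two vertices joined by a hyperpath, i.e. a sequence of distinct vertices and distinct edges with consecutive vertices in the intermediate edge). A set $S\subseteq V(G)$ is a separating vertex set if $G$ is the union of two induced subhypergraphs $G_1,G_2$ with $V(G_1)\cap V(G_2)=S$ and $|V(G_i)|>|S|$. Identifying $v$ and $w$ in $G_2$ means replacing them by a new vertex $v^*$ and replacing each edge $e$ meeting $\{v,w\}$ by $(e\setminus\{v,w\})\cup\{v^*\}$. *)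

(* Defs.v *)
From HB Require Import structures.
From mathcomp Require Import all_boot.
Set Implicit Arguments. Unset Strict Implicit. Unset Printing Implicit Defensive.

(* A (potential) hypergraph on a finite ambient vertex type T:
   a pair (V, E) with V : {set T} and E : {set {set T}} (no multiple edges). *)
Definition hg (T : finType) := ({set T} * {set {set T}})%type.

Section Hyp.
Variable T : finType.
Implicit Types (G H : hg T) (X S : {set T}).

Definition hypergraph G : Prop :=
  forall e, e \in G.2 -> e \subset G.1 /\ 1 < #|e|.

(* k-coloring: map V(G) -> {1,...,k}, every edge contains two vertices
   of different colours (values outside V(G) are irrelevant). *)
Definition coloring (k : nat) G (f : T -> nat) : Prop :=
  (forall x, x \in G.1 -> 1 <= f x <= k) /\
  (forall e, e \in G.2 -> exists x y, [/\ x \in e, y \in e & f x != f y]).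

Definition colorable (k : nat) G : Prop := exists f, coloring k G f.

Definition chi_eq G (m : nat) : Prop :=
  colorable m G /\ forall j, colorable j G -> m <= j.

Definition subhg H G : Prop :=
  hypergraph H /\ H.1 \subset G.1 /\ H.2 \subset G.2.

Definition proper_subhg H G : Prop := subhg H G /\ H <> G.

Definition critical (k : nat) G : Prop :=
  hypergraph G /\ chi_eq G k.+1 /\
  forall H, proper_subhg H G -> exists m, chi_eq H m /\ m <= k.

Definition induced G X : hg T := (X, [set e in G.2 | e \subset X]).

Definition restrict G X : hg T :=
  (X, [set e :&: X | e in G.2 & 1 < #|e :&: X|]).

Definition delete G S : hg T := restrict G (G.1 :\: S).

Definition separating G S : Prop :=
  exists X1 X2,
    X1 \subset G.1 /\ X2 \subset G.1 /\ X1 :|: X2 = G.1 /\ X1 :&: X2 = S /\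
    G.2 = (induced G X1).2 :|: (induced G X2).2 /\
    #|S| < #|X1| /\ #|S| < #|X2|.

Definition hyperpath H (u v : T) : Prop :=
  exists (vs : seq T) (es : seq {set T}),
    uniq vs /\ uniq es /\ size vs = (size es).+1 /\
    head v vs = u /\ last u vs = v /\
    {subset vs <= H.1} /\ {subset es <= H.2} /\
    (forall i, i < size es ->
       nth u vs i \in nth set0 es i /\ nth u vs i.+1 \in nth set0 es i).

Definition connected H : Prop :=
  forall u v, u \in H.1 -> v \in H.1 -> hyperpath H u v.

Definition component H G : Prop :=
  [/\ subhg H G, connected H &
      forall H', subhg H' G -> connected H' -> subhg H H' -> H' = H].

Definition add_edge G (v w : T) : hg T := (G.1, [set v; w] |: G.2).

End Hyp.

(* identifying v and w into a new vertex v* (= None) ; old vertices x become Some x *)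
Definition identify (T : finType) (G : hg T) (v w : T) : hg (option T) :=
  (None |: (Some @: (G.1 :\: [set v; w])),
   [set (if (v \in e) || (w \in e)
         then None |: (Some @: (e :\: [set v; w]))
         else Some @: e) | e : {set T} in G.2]).

(* Main.v *)
Require Import Defs.
From HB Require Import structures.
From mathcomp Require Import all_boot zify.
From Stdlib Require Import Classical.
Set Implicit Arguments. Unset Strict Implicit. Unset Printing Implicit Defensive.

Section Basics.
Variable T : finType.
Implicit Types (G H : hg T) (X S : {set T}).

Lemma color_sub k G H f : coloring k G f -> H.1 \subset G.1 -> H.2 \subset G.2 ->
  coloring k H f.
Proof.
move=> [c1 c2] s1 s2; split.
  by move=> x /(subsetP s1) /c1.
by move=> e /(subsetP s2) /c2.
Qed.

Lemma colorable_mono j k H : colorable j H -> j <= k -> colorable k H.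
Proof.
move=> [f [c1 c2]] jk; exists f; split=> // x /c1 /andP [-> h].
exact: leq_trans h jk.
Qed.

Lemma chi_of_colorable k H : colorable k H -> exists m, chi_eq H m /\ m <= k.
Proof.
elim: k => [|k IH] c.
  by exists 0; split=> //; split.
have [ck|nck] := classic (colorable k H).
  by have [m [hm mk]] := IH ck; exists m; split=> //; exact: leqW.
exists k.+1; split=> //; split=> // j cj.
rewrite ltnNge; apply/negP=> jk; apply: nck; exact: colorable_mono cj jk.
Qed.

Lemma crit_nonc k G : critical k G -> ~ colorable k G.
Proof. by move=> [_ [[_ m] _]] /m; rewrite ltnn. Qed.

Lemma crit_proper k G H : critical k G -> proper_subhg H G -> colorable k H.
Proof.
move=> [_ [_ P]] /P [m [[cm _] mk]]; exact: colorable_mono cm mk.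
Qed.

Lemma induced_hg G X : hypergraph G -> hypergraph (induced G X).
Proof. by move=> hG e; rewrite /= inE => /andP [/hG [_ ->] ->]. Qed.

Lemma induced_sub G X : hypergraph G -> X \subset G.1 -> subhg (induced G X) G.
Proof.
move=> hG XV; split; first exact: induced_hg.
split=> //=; apply/subsetP=> e; rewrite inE; by case/andP.
Qed.

Lemma induced_proper G X : hypergraph G -> X \subset G.1 -> X != G.1 ->
  proper_subhg (induced G X) G.
Proof.
move=> hG XV XnV; split; first exact: induced_sub.
by move=> E; move: XnV; rewrite -E eqxx.
Qed.

Lemma induced_mono k G (X Y : {set T}) f : X \subset Y -> coloring k (induced G Y) f ->
  coloring k (induced G X) f.
Proof.
move=> XY c; apply: (color_sub c) => //=.
apply/subsetP=> e; rewrite !inE => /andP [-> eX] /=; exact: subset_trans eX XY.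
Qed.

End Basics.

Definition tau (p q x : nat) := if x == p then q else if x == q then p else x.

Lemma tauK p q : involutive (tau p q).
Proof.
move=> x; rewrite /tau; case: (eqVneq x p) => [->|xp]; first by rewrite eqxx; case: eqVneq.
case: (eqVneq x q) => [->|xq]; first by rewrite eqxx.
by rewrite (negPf xp) (negPf xq).
Qed.

Lemma tau_inj p q : injective (tau p q).
Proof. exact: inv_inj (tauK p q). Qed.

Lemma tau_range k p q c : 0 < p <= k -> 0 < q <= k -> 0 < c <= k -> 0 < tau p q c <= k.
Proof. by rewrite /tau; case: ifP => _ //; case: ifP. Qed.

Lemma perm_exists k a b a' b' : 0 < a <= k -> 0 < b <= k -> 0 < a' <= k -> 0 < b' <= k ->
  (a == b) = (a' == b') ->
  exists s : nat -> nat, [/\ injective s, (forall c, 0 < c <= k -> 0 < s c <= k),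
     s a = a' & s b = b'].
Proof.
move=> ha hb ha' hb' E.
set b'' := tau a a' b.
have hb'' : 0 < b'' <= k by exact: tau_range.
exists (tau b'' b' \o tau a a'); split.
- by move=> x y /= /tau_inj /tau_inj.
- by move=> c hc /=; apply: tau_range => //; apply: tau_range.
- rewrite /= {2}/tau eqxx.
  have [ab|ab] := eqVneq a b.
    rewrite /b'' -ab; move: E; rewrite ab eqxx => /esym/eqP <-.
    by rewrite /tau !eqxx.
  have n1 : a' != b''.
    apply/negP=> /eqP h; move: ab; rewrite -[a'](_ : tau a a' a = a') in h; last by rewrite /tau eqxx.
    by move/tau_inj: h => ->; rewrite eqxx.
  have n2 : a' != b' by rewrite -E.
  by rewrite /tau (negPf n1) (negPf n2).
- by rewrite /= {1}/tau -/b'' eqxx.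
Qed.

Section Glue.
Variable T : finType.
Implicit Types (G H : hg T) (X S : {set T}).

Lemma glue k G (X1 X2 : {set T}) f1 f2 (s : nat -> nat) :
  X1 :|: X2 = G.1 -> (forall e, e \in G.2 -> e \subset X1 \/ e \subset X2) ->
  coloring k (induced G X1) f1 -> coloring k (induced G X2) f2 ->
  injective s -> (forall c, 0 < c <= k -> 0 < s c <= k) ->
  (forall x, x \in X1 -> x \in X2 -> s (f2 x) = f1 x) -> colorable k G.
Proof.
move=> U Esp [c1 d1] [c2 d2] si sr agr.
exists (fun x => if x \in X1 then f1 x else s (f2 x)); split.
  move=> x; rewrite -U inE; case: ifP => /= [x1 _|_ /= x2]; first exact: c1.
  by apply: sr; apply: c2.
move=> e eE; have [eX|eX] := Esp e eE.
  have [x [y [xe ye d]]] : exists x y, [/\ x \in e, y \in e & f1 x != f1 y].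
    by apply: d1; rewrite inE eE.
  exists x, y; rewrite (subsetP eX x xe) (subsetP eX y ye); by split.
have [x [y [xe ye d]]] : exists x y, [/\ x \in e, y \in e & f2 x != f2 y].
  by apply: d2; rewrite inE eE.
have F z : z \in e -> (if z \in X1 then f1 z else s (f2 z)) = s (f2 z).
  by move=> ze; case: ifP => // z1; rewrite agr // (subsetP eX).
exists x, y; rewrite (F x xe) (F y ye); split=> //.
by rewrite (inj_eq si).
Qed.

End Glue.

Lemma last_take' (T : Type) (u : T) p i : i <= size p -> last u (take i p) = nth u (u :: p) i.
Proof.
case: i => [|n] h /=; first by rewrite take0.
by rewrite (take_nth u h) last_rcons.
Qed.

Section Conn.
Variable T : finType.
Variable H0 : hg T.
Hypothesis hH0 : hypergraph H0.

Definition adj : rel T := fun x y => [exists e in H0.2, (x \in e) && (y \in e)].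

Lemma adj_sym : symmetric adj.
Proof.
move=> x y; apply/existsP/existsP=> [] [e /andP [eE /andP [h1 h2]]];
  by exists e; rewrite eE h1 h2.
Qed.

Lemma connect_sym' x y : connect adj x y -> connect adj y x.
Proof. by rewrite (sym_connect_sym adj_sym). Qed.

Lemma adj_in x y : adj x y -> y \in H0.1.
Proof.
case/existsP=> e /andP [eE /andP [_ ye]]; have [sub _] := hH0 eE.
exact: (subsetP sub).
Qed.

Lemma connect_in x z : connect adj x z -> x \in H0.1 -> z \in H0.1.
Proof.
case/connectP=> p; elim/last_ind: p => [|p y _] /=; first by move=> _ ->.
rewrite rcons_path last_rcons => /andP [_ a] -> _; exact: adj_in a.
Qed.

Definition cls x := [set y in H0.1 | connect adj x y].
Definition compo x := induced H0 (cls x).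

Lemma shortcut u p i j : path adj u p -> i.+1 < j -> j <= size p ->
  adj (nth u (u :: p) i) (nth u (u :: p) j) ->
  exists p', [/\ path adj u p', last u p' = last u p & size p' < size p].
Proof.
move=> pa ij jp a.
have j1 : j.-1 < size p.
  lia.
have dj : drop j.-1 p = nth u (u :: p) j :: drop j p.
  rewrite (drop_nth u j1); case: j ij jp j1 a => //= j _ _ _ _; by [].
exists (take i p ++ drop j.-1 p); split.
- rewrite cat_path last_take' ?dj /=; last by lia.
  rewrite a /=.
  have := pa; rewrite -[X in path _ _ X -> _](cat_take_drop i) cat_path => /andP [-> _] /=.
  move: pa; rewrite -[X in path _ _ X -> _](cat_take_drop j) cat_path => /andP [_].
  by rewrite last_take'.
- rewrite last_cat dj /=.
  by rewrite -[in RHS](cat_take_drop j.-1 p) last_cat dj.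
- rewrite size_cat size_take size_drop; case: ifP => h; lia.
Qed.


Lemma conn_hp x u y : u \in cls x -> connect adj u y -> hyperpath (compo x) u y.
Proof.
move=> ux cy.
have ex : exists n, [exists t : n.-tuple T, path adj u t && (last u t == y)].
  case/connectP: cy => p pp ->; exists (size p); apply/existsP; exists (in_tuple p).
  by rewrite pp eqxx.
case: (ex_minnP ex) => n /existsP [t /andP [pt /eqP lt]] minn.
have mini : forall p', path adj u p' -> last u p' = y -> size t <= size p'.
  move=> p' pp' lp'; rewrite size_tuple; apply: minn; apply/existsP.
  by exists (in_tuple p'); rewrite pp' lp' eqxx.
move: pt lt mini; rewrite -/(tval t); move: (tval t) => p {t minn ex} pt lt mini.
have nosc : forall i j, i.+1 < j -> j <= size p ->
    ~~ adj (nth u (u::p) i) (nth u (u::p) j).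
  move=> i j ij jp; apply/negP => a; have [p' [pp' lp' sp']] := shortcut pt ij jp a.
  have := mini p' pp'; rewrite lp' lt => /(_ erefl); lia.
have adjs : forall i, i < size p -> adj (nth u (u :: p) i) (nth u (u :: p) i.+1).
  by move/(pathP u): pt.
set f := fun i => odflt set0 [pick e in H0.2 | (nth u (u :: p) i \in e) && (nth u (u :: p) i.+1 \in e)].
have fP : forall i, i < size p ->
    [/\ f i \in H0.2, nth u (u :: p) i \in f i & nth u (u :: p) i.+1 \in f i].
  move=> i ip; rewrite /f; case: pickP => [e /andP [eE /andP [h1 h2]]|none] /=.
    by split.
  have := adjs i ip; case/existsP => e /andP [eE h]; move: (none e); by rewrite eE h.
have inc : {subset u :: p <= cls x}.
  move=> z zs; move: ux; rewrite !inE => /andP [uH xu].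
  have uz := path_connect pt zs.
  by rewrite (connect_in uz uH) (connect_trans xu uz).
exists (u :: p), (mkseq f (size p)); split; [|split; [|split; [|split; [|split; [|split; [|split]]]]]].
- case: (boolP (uniq (u :: p))) => // /(uniqPn u) [i [j [ij js E]]]; exfalso.
  have [jp|jp] := ltnP j (size p).
    move: (nosc i j.+1); rewrite E adjs //; move/(_ _ _)/negP; apply=> //; lia.
  have jq : j = size p by move: js => /= js; lia.
  have P1 : path adj u (take i p).
    by move: pt; rewrite -[X in path _ _ X -> _](cat_take_drop i) cat_path => /andP [].
  have P2 : last u (take i p) = y.
    by rewrite last_take' ?E ?jq -?last_nth // -jq ltnW.
  have := mini _ P1 P2; rewrite size_take; case: ifP => ip; lia.
- case: (boolP (uniq (mkseq f (size p)))) => // /(uniqPn set0) [i [j [ij js E]]]; exfalso.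
  rewrite size_mkseq in js; rewrite !nth_mkseq // in E; last by lia.
  have [h1 h2 _] := fP i (ltn_trans ij js); have [_ _ h3] := fP j js.
  move: (nosc i j.+1); rewrite -E in h3.
  have -> : adj (nth u (u :: p) i) (nth u (u :: p) j.+1).
    by apply/existsP; exists (f i); rewrite h1 h2 h3.
  move/(_ _ _)/negP; apply=> //; lia.
- by rewrite size_mkseq.
- by [].
- by [].
- exact: inc.
- move=> e /mapP [i]; rewrite mem_iota add0n => /andP [_ ip] ->.
  have [h1 h2 _] := fP i ip; rewrite /compo /induced /= inE h1 /=.
  apply/subsetP=> z zf.
  have zs : nth u (u :: p) i \in cls x by apply: inc; rewrite mem_nth //= ltnW.
  move: zs; rewrite !inE => /andP [_ xs].
  have a : adj (nth u (u :: p) i) z by apply/existsP; exists (f i); rewrite h1 h2 zf.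
  by rewrite (adj_in a) (connect_trans xs (connect1 a)).
- move=> i; rewrite size_mkseq => ip; rewrite nth_mkseq //; by have [] := fP i ip.
Qed.

Lemma hp_connect H u v : hyperpath H u v -> H.2 \subset H0.2 -> connect adj u v.
Proof.
move=> [vs [es [_ [_ [sz [hd [la [_ [ses nh]]]]]]]]] sub.
case: vs sz hd la nh => // a r /= [sz] hd la nh; subst a.
suff: forall i, i <= size es -> connect adj u (nth u (u :: r) i).
  by move/(_ (size es) (leqnn _)); rewrite -sz -last_nth la.
elim=> [|i IH] ilt; first exact: connect0.
apply: connect_trans (IH (ltnW ilt)) _; apply: connect1; apply/existsP.
have [h1 h2] := nh i ilt; exists (nth set0 es i); rewrite h1 h2 andbT.

rewrite andbT; by apply: (subsetP sub); apply: ses; rewrite mem_nth.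
Qed.


Lemma cls_in x : cls x \subset H0.1.
Proof. by apply/subsetP=> z; rewrite inE => /andP []. Qed.

Lemma cls_self x : x \in H0.1 -> x \in cls x.
Proof. by move=> xH; rewrite inE xH connect0. Qed.

Lemma cls_eq x y : y \in cls x -> cls y = cls x.
Proof.
rewrite inE => /andP [_ xy]; apply/setP=> z; rewrite !inE.
case: (z \in H0.1) => //=; apply/idP/idP => h.
  exact: connect_trans xy h.
exact: connect_trans (connect_sym' xy) h.
Qed.

Lemma comp_component x : x \in H0.1 -> component (compo x) H0.
Proof.
move=> xH.
have sub : subhg (compo x) H0.
  split; first exact: induced_hg.
  split; first exact: cls_in.
  by apply/subsetP=> e; rewrite inE => /andP [].
split=> //.
  move=> u v /= uc vc; apply: conn_hp => //.
  move: uc vc; rewrite !inE => /andP [_ xu] /andP [_ xv].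
  exact: connect_trans (connect_sym' xu) xv.
move=> [V' E'] [hH' [/= s1 s2]] cH' [_ [/= s3 s4]].
have e1 : V' = cls x.
  apply/eqP; rewrite eqEsubset s3 andbT; apply/subsetP=> y yV.
  have xV : x \in V' by apply: (subsetP s3); exact: cls_self.
  have := hp_connect (cH' x y xV yV) s2 => xy.
  by rewrite inE (subsetP s1 y yV) xy.
subst V'; congr pair; apply/eqP; rewrite eqEsubset s4 andbT.
apply/subsetP=> e eE; rewrite inE (subsetP s2 e eE) /=.
by have [] := hH' e eE.
Qed.

Lemma component_comp H : component H H0 -> H0.1 != set0 ->
  exists2 x, x \in H0.1 & H = compo x.
Proof.
case=> [[hH [s1 s2]] cH mH] ne.
have [none|[x xH1]] := set_0Vmem H.1; last first.
  have xH : x \in H0.1 by exact: (subsetP s1).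
  exists x => //; apply: esym; apply: mH.
  - by have [] := comp_component xH.
  - by have [] := comp_component xH.
  split=> //; split=> /=.
    apply/subsetP=> y yH; rewrite inE (subsetP s1 y yH).
    exact: hp_connect (cH x y xH1 yH) s2.
  apply/subsetP=> e eH; rewrite inE (subsetP s2 e eH) /=.
  have [se _] := hH e eH; apply: subset_trans se _.
  apply/subsetP=> y yH; rewrite inE (subsetP s1 y yH).
  exact: hp_connect (cH x y xH1 yH) s2.
case/set0Pn: ne => z zH.
have E : compo z = H.
  apply: mH.
  - by have [] := comp_component zH.
  - by have [] := comp_component zH.
  split=> //; split=> /=.
    by rewrite none sub0set.
  apply/subsetP=> e eH; have [se ce] := hH e eH.
  have [y ye] : exists y, y \in e.
    by apply/set0Pn; rewrite -card_gt0; apply: ltn_trans ce.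
  have yy := subsetP se y ye; by rewrite none inE in yy.
have zz := cls_self zH; by rewrite -[cls z]/((compo z).1) E none inE in zz.
Qed.

End Conn.

Lemma recolor (T : finType) k (H : hg T) f w' : hypergraph H -> coloring k H f ->
  coloring k.+1 H (fun x => if x == w' then k.+1 else f x).
Proof.
move=> hH [c1 c2]; split.
  move=> x xH; case: ifP => _ //; have := c1 x xH; lia.
move=> e eH; have [x [y [xe ye d]]] := c2 e eH; exists x, y; split=> //.
have [se _] := hH e eH.
have rx := c1 x (subsetP se x xe); have ry := c1 y (subsetP se y ye).
case: (eqVneq x w') => ex; case: (eqVneq y w') => ey //.
- by subst; rewrite eqxx in d.
- apply/eqP; lia.
- apply/eqP; lia.
Qed.

Lemma edge2 (T : finType) k (H : hg T) f v w : coloring k H f -> [set v; w] \in H.2 -> f v != f w.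
Proof.
move=> [_ c2] /c2 [x [y [xe ye d]]]; move: xe ye d; rewrite !inE.
by case/orP=> /eqP -> /orP [] /eqP ->; rewrite ?eqxx // eq_sym.
Qed.

Section Final.
Variable T : finType.
Variables (k : nat) (G : hg T) (X1 X2 : {set T}) (v w : T).
Hypothesis crit : critical k G.
Hypothesis vw : v != w.
Hypothesis U : X1 :|: X2 = G.1.
Hypothesis I : X1 :&: X2 = [set v; w].
Hypothesis Esp : forall e, e \in G.2 -> e \subset X1 \/ e \subset X2.
Hypothesis nvw : [set v; w] \notin G.2.
Hypothesis ex1 : exists f, coloring k (induced G X1) f.
Hypothesis all1 : forall f, coloring k (induced G X1) f -> f v = f w.
Hypothesis ex2 : exists f, coloring k (induced G X2) f.
Hypothesis all2 : forall f, coloring k (induced G X2) f -> f v <> f w.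

Let hG : hypergraph G. Proof. by case: crit. Qed.
Let vI : v \in X1 :&: X2. Proof. by rewrite I !inE eqxx. Qed.
Let wI : w \in X1 :&: X2. Proof. by rewrite I !inE eqxx orbT. Qed.
Let v1 : v \in X1. Proof. by move: vI; rewrite inE => /andP []. Qed.
Let v2 : v \in X2. Proof. by move: vI; rewrite inE => /andP []. Qed.
Let w1 : w \in X1. Proof. by move: wI; rewrite inE => /andP []. Qed.
Let w2 : w \in X2. Proof. by move: wI; rewrite inE => /andP []. Qed.
Let X1V : X1 \subset G.1. Proof. by rewrite -U subsetUl. Qed.
Let X2V : X2 \subset G.1. Proof. by rewrite -U subsetUr. Qed.

Lemma both_false e : e \in G.2 -> e \subset X1 -> e \subset X2 -> False.
Proof.
move=> eE s1 s2.
have sP : e \subset [set v; w] by rewrite -I subsetI s1 s2.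
have [_ ce] := hG eE.
have : e == [set v; w] by rewrite eqEcard sP cards2 vw.
by move/eqP=> ep; move: nvw; rewrite -ep eE.
Qed.

Lemma col_of_subhg H : subhg H G -> H <> G -> exists m, chi_eq H m /\ m <= k.
Proof. by move=> s n; case: crit => _ [_]; apply; split. Qed.

Lemma part_b : critical k (add_edge (induced G X1) v w).
Proof.
set G1 := induced G X1.
have hG1 : hypergraph G1 by exact: induced_hg.
have hGe : hypergraph (add_edge G1 v w).
  move=> e; rewrite /= !inE => /orP [/eqP ->|eG1]; last by apply: hG1; rewrite /G1 /induced /= inE.
  split; last by rewrite cards2 vw.
  by apply/subsetP=> x; rewrite !inE => /orP [] /eqP ->.
split=> //; split.
  split.
    have [f cf] := ex1; exists (fun x => if x == w then k.+1 else f x).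
    have [c1 c2] := recolor w hG1 cf; split=> // e; rewrite /= in_setU in_set1 => /orP [/eqP ->|].
      exists v, w; rewrite !inE !eqxx orbT (negPf vw); split=> //.
      have [r1 _] := cf; have := r1 v v1; move=> h; apply/eqP; lia.
    exact: c2.
  move=> j cj; rewrite ltnNge; apply/negP=> jk.
  have [f [c1 c2]] := colorable_mono cj jk.
  have cf1 : coloring k G1 f.
    split=> // e eG; apply: c2; by rewrite /= inE eG orbT.
  have cf : coloring k (add_edge G1 v w) f := conj c1 c2.
  have := @edge2 _ _ _ _ v w cf; rewrite /= in_setU in_set1 eqxx /= => /(_ isT).
  by rewrite (all1 cf1) eqxx.
move=> H [[hH [s1 s2]] nH]; apply: chi_of_colorable.
case: (boolP ([set v; w] \in H.2)) => vwH; last first.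
  have [f cf] := ex1; exists f; apply: (color_sub cf) => //.
  apply/subsetP=> e eH; have := subsetP s2 e eH; rewrite /= in_setU in_set1 => /orP [/eqP E|//].
  by move: vwH; rewrite -E eH.
have [vH wH] : v \in H.1 /\ w \in H.1.
  have [se _] := hH _ vwH; split; apply: (subsetP se); by rewrite !inE eqxx ?orbT.
set K : hg T := (H.1 :|: X2, (H.2 :\ [set v; w]) :|: (induced G X2).2).
have hK : hypergraph K.
  move=> e; rewrite /K /= !inE => /orP [/andP [_ eH]|/andP [eE eX]].
    have [se ce] := hH e eH; split=> //; exact: subset_trans se (subsetUl _ _).
  have [_ ce] := hG eE; split=> //; exact: subset_trans eX (subsetUr _ _).
have sK : subhg K G.
  split=> //; split=> /=.
    by rewrite subUset X2V andbT; apply: subset_trans s1 _.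
  rewrite subUset; apply/andP; split.
    apply/subsetP=> e; rewrite !inE => /andP [ne eH].
    have := subsetP s2 e eH; rewrite /= !inE (negPf ne) /=; by case/andP.
  by apply/subsetP=> e; rewrite inE => /andP [].
have nK : K <> G.
  move=> KG.
  case: (boolP (G1.1 \subset H.1)) => sv.
    case: (boolP ((add_edge G1 v w).2 \subset H.2)) => se.
      apply: nH; move: s1 s2 sv se; case: H {hH vwH vH wH K hK sK KG} => a b /= h1 h2 h3 h4.
      by congr pair; apply/eqP; rewrite eqEsubset ?h1 ?h2 ?h3 ?h4.
    case/subsetPn: se => e; rewrite /= in_setU in_set1 => /orP [/eqP ->|eG1 eH].
      by rewrite vwH.
    move: eG1; rewrite inE => /andP [eE eX1].
    have : e \in K.2 by rewrite KG.
    rewrite /K /= !inE (negPf eH) andbF /= eE /= => eX2.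
    exact: both_false eE eX1 eX2.
  case/subsetPn: sv => z /= zX1 zH.
  have : z \in K.1 by rewrite KG (subsetP X1V).
  rewrite /K /= inE (negPf zH) /= => zX2.
  have : z \in X1 :&: X2 by rewrite inE zX1 zX2.
  rewrite I !inE => /orP [] /eqP E; subst z; by rewrite ?vH ?wH in zH.
have [m [[cm _] mk]] := col_of_subhg sK nK.
have [f cf] := colorable_mono cm mk.
have cf2 : coloring k (induced G X2) f.
  apply: (color_sub cf); [exact: subsetUr | exact: subsetUr].
exists f; split.
  by move=> x xH; case: cf => c1 _; apply: c1; rewrite /K /= inE xH.
move=> e eH; case: (eqVneq e [set v; w]) => [->|ne].
  exists v, w; rewrite !inE !eqxx orbT; split=> //; apply/eqP; exact: all2.
by case: cf => _ c2; apply: c2; rewrite /K /= !inE ne eH.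
Qed.


Definition rho (x : T) : option T := if x \in [set v; w] then None else Some x.
Definition img (e : {set T}) : {set option T} :=
  if (v \in e) || (w \in e) then None |: (Some @: (e :\: [set v; w])) else Some @: e.

Lemma identifyE (K : hg T) :
  identify K v w = (None |: (Some @: (K.1 :\: [set v; w])), img @: K.2).
Proof. by []. Qed.

Lemma I1 (e : {set T}) x : x \in e -> rho x \in img e.
Proof.
move=> xe; rewrite /rho /img; case: ifP => xP.
  have -> : (v \in e) || (w \in e).
    by move: xP; rewrite !inE => /orP [] /eqP <-; rewrite xe ?orbT.
  exact: setU11.
case: ifP => _; last exact: imset_f.
by rewrite in_setU imset_f ?orbT // inE xP.
Qed.

Lemma I2 (e : {set T}) o : o \in img e -> exists2 x, x \in e & rho x = o.
Proof.
rewrite /img; case: ifP => m.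
  rewrite in_setU in_set1 => /orP [/eqP ->|/imsetP [y]].
    case/orP: m => h; [exists v | exists w] => //; by rewrite /rho !inE eqxx ?orbT.
  rewrite inE => /andP [yP ye] ->; exists y => //; by rewrite /rho (negPf yP).
case/imsetP=> y ye ->; exists y => //; rewrite /rho !inE.
case: eqP => [E|_]; first by subst; rewrite ye in m.
case: eqP => [E|//]; by subst; rewrite ye orbT in m.
Qed.

Lemma transfer1 psi : coloring k (identify (induced G X2) v w) psi ->
  coloring k (induced G X2) (fun x => psi (rho x)).
Proof.
move=> [c1 c2]; split.
  move=> x xX; apply: c1; rewrite /= /rho; case: ifP => xP; first exact: setU11.
  by rewrite in_setU imset_f ?orbT // inE xP.
move=> e eE; have [o1 [o2 [h1 h2 d]]] := c2 (img e) (imset_f _ eE).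
have [x1 x1e E1] := I2 h1; have [x2 x2e E2] := I2 h2.
by exists x1, x2; rewrite E1 E2.
Qed.

Lemma rhoP (f : T -> nat) x : f v = f w -> f (odflt v (rho x)) = f x.
Proof.
move=> E; rewrite /rho; case: ifP => // /=; rewrite !inE => /orP [] /eqP -> //.
Qed.

Lemma transfer2 (Hs : hg (option T)) (K : hg T) f : coloring k K f -> f v = f w ->
  Hs.2 \subset (identify (induced G X2) v w).2 -> v \in K.1 ->
  (forall x, Some x \in Hs.1 -> x \in K.1) ->
  (forall e, e \in (induced G X2).2 -> img e \in Hs.2 -> e \in K.2) ->
  coloring k Hs (fun o => f (odflt v o)).
Proof.
move=> [c1 c2] E sub vK sK eK; split.
  by case=> [x|] /= h; apply: c1; [exact: sK | exact: vK].
move=> o oH; have := subsetP sub o oH; rewrite /= => /imsetP [e eE oe]; subst o.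
have [x [y [xe ye d]]] := c2 e (eK e eE oH).
exists (rho x), (rho y); rewrite !I1 // !rhoP //.
Qed.

Lemma part_c : critical k (identify (induced G X2) v w).
Proof.
set G2 := induced G X2.
have hG2 : hypergraph G2 by exact: induced_hg.
have out : forall e, e \in G2.2 -> exists2 y, y \in e & y \notin [set v; w].
  move=> e eE; case: (boolP (e \subset [set v; w])) => [sP|/subsetPn //].
  move: eE; rewrite inE => /andP [eE _]; exfalso; apply: (both_false eE).
    by apply: subset_trans sP _; rewrite -I subsetIl.
  by apply: subset_trans sP _; rewrite -I subsetIr.
have hS : hypergraph (identify G2 v w).
  move=> o; rewrite identifyE => /imsetP [e eE ->].
  have [se ce] := hG2 e eE.
  split.
    apply/subsetP=> p /I2 [x xe <-]; rewrite /rho; case: ifP => xP; first exact: setU11.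
    by rewrite in_setU imset_f ?orbT // inE xP (subsetP se).
  rewrite /img; case: ifP => m.
    rewrite cardsU1 (card_imset _ (@Some_inj _)).
    have [y ye yP] := out e eE.
    have : 0 < #|e :\: [set v; w]| by apply/card_gt0P; exists y; rewrite inE yP.
    have -> : None \notin Some @: (e :\: [set v; w]) by apply/imsetP => [[y' _]].
    by rewrite add1n ltnS.
  by rewrite (card_imset _ (@Some_inj _)).
have PX1 : [set v; w] \subset X1 by rewrite -I subsetIl.
split=> //; split.
  split.
    have [f2 [c1 c2]] := ex2.
    exists (fun o => if o is Some x then f2 x else k.+1); split.
      case=> [x|] /=; last by rewrite ltnSn.
      rewrite in_setU1 /= => /imsetP [y]; rewrite inE => /andP [_ yX] [->].
      by case/andP: (c1 y yX) => h1 h2; rewrite h1 (leq_trans h2 (leqnSn k)).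
    move=> o /imsetP [e eE ->]; rewrite /img; case: ifP => m.
      have [y ye yP] := out e eE; exists None, (Some y); split.
      - exact: setU11.
      - by rewrite in_setU1 /= imset_f // inE yP.
      - have [se _] := hG2 e eE; have h := c1 y (subsetP se y ye).
        by apply/eqP=> E; rewrite -E ltnn andbF in h.
    have [x [y [xe ye d]]] := c2 e eE; exists (Some x), (Some y); split=> //; exact: imset_f.
  move=> j cj; rewrite ltnNge; apply/negP=> jk.
  have [psi cpsi] := colorable_mono cj jk.
  have := all2 (transfer1 cpsi); rewrite /rho !inE !eqxx orbT; by [].
move=> Hs [[hHs [s1 s2]] nHs]; apply: chi_of_colorable.
set K : hg T := (X1 :|: [set x | Some x \in Hs.1],
                 (induced G X1).2 :|: [set e in G2.2 | img e \in Hs.2]).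
have someK : forall x, Some x \in Hs.1 -> x \in X2 :\: [set v; w].
  move=> x xH; have := subsetP s1 _ xH; rewrite /= in_setU1 /=.
  by case/imsetP=> y yX [->].
have hK : hypergraph K.
  move=> e; rewrite /K /= in_setU => /orP [eK|].
    have [se ce] := @induced_hg _ G X1 hG e eK; split=> //; exact: subset_trans se (subsetUl _ _).
  rewrite inE => /andP [eE iH]; have [_ ce] := hG2 e eE; split=> //.
  apply/subsetP=> x xe; have := I1 xe; move/(subsetP (proj1 (hHs _ iH))).
  rewrite /rho; case: ifP => xP h; first by rewrite in_setU (subsetP PX1).
  by rewrite in_setU inE h orbT.
have sK : subhg K G.
  split=> //; split=> /=.
    rewrite subUset X1V /=; apply/subsetP=> x; rewrite inE => /someK.
    rewrite inE => /andP [_ xX]; exact: (subsetP X2V).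
  rewrite subUset; apply/andP; split; apply/subsetP=> e; rewrite !inE; case/andP=> //.
  by move=> /andP [].
have nK : K <> G.
  move=> KG.
  case: (boolP ((identify G2 v w).2 \subset Hs.2)) => se; last first.
    case/subsetPn: se => o /imsetP [e eE ->] nI.
    move: eE; rewrite inE => /andP [eE eX2].
    have : e \in K.2 by rewrite KG.
    rewrite /K /= in_setU !inE (negPf nI) eE /=.
    rewrite andbF orbF => eX1.
    exact: both_false eE eX1 eX2.
  case: (boolP ((identify G2 v w).1 \subset Hs.1)) => sv.
    apply: nHs; move: s1 s2 sv se; case: Hs {hHs K hK sK someK KG} => a b /= h1 h2 h3 h4.
    by congr pair; apply/eqP; rewrite eqEsubset ?h1 ?h2 ?h3 ?h4.
  case/subsetPn: sv => o; rewrite in_setU1 => /orP [/eqP ->|oI] nH.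
    have noP : forall e, e \in G2.2 -> (v \in e) = false.
      move=> e eE; apply/negP=> ve.
      have iH : img e \in Hs.2 by apply: (subsetP se); exact: imset_f.
      have := subsetP (proj1 (hHs _ iH)) None; rewrite /img ve /= setU11 => /(_ isT).
      by rewrite (negPf nH).
    have [f2 [c1 c2]] := ex2.
    apply: (all2 (f := fun x => if x == v then f2 w else f2 x)).
      split.
        by move=> x xX; case: ifP => _; [apply: c1 | apply: c1].
      move=> e eE; have [x [y [xe ye d]]] := c2 e eE; exists x, y; split=> //.
      have nv : forall z, z \in e -> (z == v) = false.
        by move=> z ze; apply/negP=> /eqP E; subst z; rewrite noP in ze.
      by rewrite !nv.
    by rewrite eqxx eq_sym (negPf vw).
  case/imsetP: oI => x; rewrite inE => /andP [xP xX] oE; subst o.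
  have : x \in K.1 by rewrite KG (subsetP X2V).
  rewrite /K /= in_setU inE (negPf nH) orbF => xX1.
  by move: xP; rewrite -I inE xX1 xX.
have [m [[cm _] mk]] := col_of_subhg sK nK.
have [f cf] := colorable_mono cm mk.
have fvw : f v = f w.
  apply: all1; apply: (color_sub cf); [exact: subsetUl | exact: subsetUl].
exists (fun o => f (odflt v o)); apply: transfer2 cf fvw s2 _ _ _.
- by rewrite /K /= in_setU (subsetP PX1) // !inE eqxx.
- by move=> x xH; rewrite /K /= in_setU inE xH orbT.
- move=> e eE iH; rewrite /K /= in_setU; apply/orP; right; rewrite inE iH andbT; exact: eE.
Qed.

End Final.

Section Main.
Variable T : finType.
Variables (k : nat) (G : hg T).
Hypothesis crit : critical k G.

Let hG : hypergraph G. Proof. by case: crit. Qed.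

Lemma noglue (Y1 Y2 : {set T}) v w g1 g2 :
  Y1 :|: Y2 = G.1 -> Y1 :&: Y2 = [set v; w] ->
  (forall e, e \in G.2 -> e \subset Y1 \/ e \subset Y2) ->
  coloring k (induced G Y1) g1 -> coloring k (induced G Y2) g2 ->
  (g1 v == g1 w) = (g2 v == g2 w) -> False.
Proof.
move=> U I Esp cg1 cg2 E.
have vI : v \in Y1 :&: Y2 by rewrite I !inE eqxx.
have wI : w \in Y1 :&: Y2 by rewrite I !inE eqxx orbT.
move: (vI) (wI); rewrite !inE => /andP [v1 v2] /andP [w1 w2].
have [r1 _] := cg1; have [r2 _] := cg2.
have [s [si sr s1 s2]] := perm_exists (r2 v v2) (r2 w w2) (r1 v v1) (r1 w w1) (esym E).
apply: (crit_nonc crit); apply: (glue U Esp cg1 cg2 si sr).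
move=> x x1 x2; have : x \in Y1 :&: Y2 by rewrite inE x1 x2.
by rewrite I !inE => /orP [] /eqP ->.
Qed.

Definition Acol (Y : {set T}) v w := exists f, coloring k (induced G Y) f /\ f v = f w.
Definition Bcol (Y : {set T}) v w := exists f, coloring k (induced G Y) f /\ f v <> f w.

Lemma Acol_mono (X Y : {set T}) v w : X \subset Y -> Acol Y v w -> Acol X v w.
Proof. by move=> XY [f [cf E]]; exists f; split=> //; exact: induced_mono cf. Qed.

Lemma Bcol_mono (X Y : {set T}) v w : X \subset Y -> Bcol Y v w -> Bcol X v w.
Proof. by move=> XY [f [cf E]]; exists f; split=> //; exact: induced_mono cf. Qed.

Lemma AB_split (Y1 Y2 : {set T}) v w :
  Y1 :|: Y2 = G.1 -> Y1 :&: Y2 = [set v; w] ->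
  (forall e, e \in G.2 -> e \subset Y1 \/ e \subset Y2) ->
  Y1 != G.1 -> Y2 != G.1 ->
  [/\ Acol Y1 v w \/ Bcol Y1 v w, (Acol Y1 v w <-> Bcol Y2 v w),
      (Bcol Y1 v w <-> Acol Y2 v w), ~ (Acol Y1 v w /\ Bcol Y1 v w)
    & ~ (Acol Y2 v w /\ Bcol Y2 v w)].
Proof.
move=> U I Esp n1 n2.
have s1 : Y1 \subset G.1 by rewrite -U subsetUl.
have s2 : Y2 \subset G.1 by rewrite -U subsetUr.
have AB : forall Y : {set T}, Y \subset G.1 -> Y != G.1 -> Acol Y v w \/ Bcol Y v w.
  move=> Y sY nY; have [f cf] := crit_proper crit (induced_proper hG sY nY).
  case: (eqVneq (f v) (f w)) => E; [left|right]; exists f; split=> //; exact/eqP.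
have nAA : ~ (Acol Y1 v w /\ Acol Y2 v w).
  move=> [[f1 [c1 E1]] [f2 [c2 E2]]]; apply: (noglue U I Esp c1 c2).
  by rewrite E1 E2 !eqxx.
have nBB : ~ (Bcol Y1 v w /\ Bcol Y2 v w).
  move=> [[f1 [c1 E1]] [f2 [c2 E2]]]; apply: (noglue U I Esp c1 c2).
  by move/eqP/negPf: E1 => ->; move/eqP/negPf: E2 => ->.
have h1 := AB _ s1 n1; have h2 := AB _ s2 n2; split; clear -nAA nBB h1 h2; tauto.
Qed.


Variable S : {set T}.
Hypothesis SV : S \subset G.1.
Local Notation H0 := (delete G S).
Local Notation V' := (G.1 :\: S).

Lemma hH0 : hypergraph H0.
Proof.
move=> e' /= /imsetP [e]; rewrite inE => /andP [_ c] ->; split=> //; exact: subsetIr.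
Qed.

Lemma adjP x y : adj H0 x y ->
  exists2 e, e \in G.2 & [/\ x \in e, y \in e, x \in V' & y \in V'].
Proof.
case/existsP=> e' /andP [/imsetP [e]]; rewrite inE => /andP [eE _] -> /andP [].
rewrite !in_setI => /andP [xe xV] /andP [ye yV]; by exists e.
Qed.

Lemma adjI e x y : e \in G.2 -> x \in e -> y \in e -> x \in V' -> y \in V' -> x != y ->
  adj H0 x y.
Proof.
move=> eE xe ye xV yV xy; apply/existsP; exists (e :&: V'); rewrite !in_setI xe ye xV yV /=.
rewrite andbT; apply/imsetP; exists e => //; rewrite inE eE /=.
by apply/card_gt1P; exists x, y; rewrite !in_setI xe ye xV yV.
Qed.

Lemma closed_conn (U : {set T}) : (forall x y, x \in U -> adj H0 x y -> y \in U) ->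
  forall x y, connect (adj H0) x y -> x \in U -> y \in U.
Proof.
move=> cU x y /connectP [p pp ->]; elim: p x pp => [|z p IH] x //= /andP [a pp] xU.
exact: IH pp (cU _ _ xU a).
Qed.

Lemma cls_closed x : forall y z, y \in cls H0 x -> adj H0 y z -> z \in cls H0 x.
Proof.
move=> y z yc a; have [e _ [_ _ _ zV]] := adjP a.
move: yc; rewrite inE => /andP [_ xy]; rewrite inE; apply/andP; split=> //.
exact: connect_trans xy (connect1 a).
Qed.

Lemma split_closed (U : {set T}) : U \subset V' ->
  (forall x y, x \in U -> adj H0 x y -> y \in U) ->
  [/\ (U :|: S) :|: (G.1 :\: U) = G.1, (U :|: S) :&: (G.1 :\: U) = S &
      forall e, e \in G.2 -> e \subset U :|: S \/ e \subset G.1 :\: U].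
Proof.
move=> UV cU; split.
- apply/setP=> z; rewrite !inE; case: (boolP (z \in U)) => zU /=.
    by move: (subsetP UV z zU); rewrite !inE => /andP [].
  by case: (boolP (z \in S)) => //= zS; rewrite (subsetP SV z zS).
- apply/setP=> z; rewrite !inE; case: (boolP (z \in U)) => zU /=.
    by move: (subsetP UV z zU); rewrite !inE => /andP [/negPf ->].
  by case: (boolP (z \in S)) => //= zS; rewrite (subsetP SV z zS).
- move=> e eE; case: (boolP [exists x in e, x \in U]) => [/exists_inP [x xe xU]|].
    left; apply/subsetP=> y ye; rewrite inE.
    case: (boolP (y \in S)) => yS; rewrite ?orbT //= orbF.
    have [se _] := hG eE.
    have yV : y \in V' by rewrite inE yS (subsetP se).
    case: (eqVneq x y) => [<- //|xy].
    exact: cU x y xU (adjI eE xe ye (subsetP UV x xU) yV xy).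
  move/exists_inPn => h; right; apply/subsetP=> y ye; rewrite inE h //.
  by have [se _] := hG eE; rewrite (subsetP se).
Qed.


Lemma cls_sub x : cls H0 x \subset V'.
Proof. exact: cls_in. Qed.

Lemma cls_disj x y z : z \in cls H0 x -> z \in cls H0 y -> y \in V' -> y \in cls H0 x.
Proof.
move=> zx zy yV; have e1 := cls_eq zx; have e2 := cls_eq zy.
by rewrite -e1 e2 (@cls_self _ H0 y yV).
Qed.

Lemma cls_sub2 x y : y \in V' -> y \notin cls H0 x -> cls H0 y :|: S \subset G.1 :\: cls H0 x.
Proof.
move=> yV yx; apply/subsetP=> z; rewrite in_setU => /orP [zy|zS].
  have zV := subsetP (cls_sub y) z zy.
  rewrite inE (subsetP (subsetDl _ _) z zV) andbT; apply/negP=> zx.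
  by move: yx; rewrite (cls_disj zx zy yV).
rewrite inE (subsetP SV z zS) andbT; apply/negP=> zx.
by have := subsetP (cls_sub x) z zx; rewrite inE zS.
Qed.

Lemma cls_AB x y v w : S = [set v; w] -> x \in V' -> y \in V' -> y \notin cls H0 x ->
  let Y1 := cls H0 x :|: S in let Y2 := G.1 :\: cls H0 x in
  [/\ Acol Y1 v w \/ Bcol Y1 v w, (Acol Y1 v w <-> Bcol Y2 v w),
      (Bcol Y1 v w <-> Acol Y2 v w), ~ (Acol Y1 v w /\ Bcol Y1 v w)
    & ~ (Acol Y2 v w /\ Bcol Y2 v w)].
Proof.
move=> SE xV yV yx Y1 Y2.
have [U I Esp] := split_closed (cls_sub x) (@cls_closed x).
apply: AB_split => //; first by rewrite I.
  apply/eqP=> E; have : y \in Y1 by rewrite E (subsetP (subsetDl _ _) y yV).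
  rewrite in_setU (negPf yx) /=; by move: yV; rewrite inE => /andP [/negPf ->].
apply/eqP=> E; have : x \in Y2 by rewrite E (subsetP (subsetDl _ _) x xV).
by rewrite inE (@cls_self _ H0 x xV).
Qed.

Lemma cls_cover a b v w z : S = [set v; w] -> a \in V' -> b \in V' -> b \notin cls H0 a ->
  z \in V' -> z \in cls H0 a \/ z \in cls H0 b.
Proof.
move=> SE aV bV ba zV.
case: (boolP (z \in cls H0 a)) => za; first by left.
case: (boolP (z \in cls H0 b)) => zb; first by right.
exfalso.
have ab : a \notin cls H0 b.
  apply/negP=> ab; move: ba; rewrite (cls_eq ab) (@cls_self _ H0 b bV) //.
have az : a \notin cls H0 z.
  apply/negP=> az; move: za; rewrite (cls_eq az) (@cls_self _ H0 z zV) //.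
have [ABa Aa Ba Ea _] := cls_AB SE aV bV ba.
have [_ Ab Bb _ _] := cls_AB SE bV aV ab.
have [_ _ _ Ez _] := cls_AB SE zV aV az.
have sba := cls_sub2 bV ba; have sza := cls_sub2 zV za; have szb := cls_sub2 zV zb.
case: ABa => [h|h].
  have hB := proj1 Aa h.
  have hBz := Bcol_mono sza hB; have hBb := Bcol_mono sba hB.
  have := proj1 Bb hBb => hA; have := Acol_mono szb hA => hAz.
  by apply: Ez.
have hA := proj1 Ba h.
have hAz := Acol_mono sza hA; have hAb := Acol_mono sba hA.
have := proj1 Ab hAb => hB; have := Bcol_mono szb hB => hBz.
by apply: Ez.
Qed.


Lemma finish p q v w : S = [set v; w] -> v != w -> [set v; w] \notin G.2 ->
  p \in V' -> q \in V' -> q \notin cls H0 p ->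
  (forall z, z \in V' -> z \in cls H0 p \/ z \in cls H0 q) ->
  Acol (cls H0 p :|: S) v w -> ~ Bcol (cls H0 p :|: S) v w ->
  Bcol (cls H0 q :|: S) v w -> ~ Acol (cls H0 q :|: S) v w ->
  exists H1 H2 : hg T,
        [/\ H1 <> H2, component H1 (delete G S), component H2 (delete G S),
            (forall H, component H (delete G S) -> H = H1 \/ H = H2) &
            let G1 := induced G (H1.1 :|: S) in
            let G2 := induced G (H2.1 :|: S) in
            [/\ exists phi1, coloring k G1 phi1 /\ phi1 v = phi1 w,
                (forall phi, coloring k G1 phi -> phi v = phi w),
                (forall phi, coloring k G2 phi -> phi v <> phi w),
                critical k (add_edge G1 v w) &
                critical k (identify G2 v w)]].
Proof.
move=> SE vw nvw pV qV qp cov Ap nBp Bq nAq.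
have pq : p \notin cls H0 q.
  apply/negP=> pq; move: qp; rewrite (cls_eq pq) (@cls_self _ H0 q qV) //.
have U : (cls H0 p :|: S) :|: (cls H0 q :|: S) = G.1.
  apply/setP=> z; rewrite !in_setU; apply/idP/idP.
    case/orP=> /orP [h|h]; try exact: (subsetP SV).
      by have := subsetP (cls_sub p) z h; rewrite inE => /andP [].
    by have := subsetP (cls_sub q) z h; rewrite inE => /andP [].
  move=> zG; case: (boolP (z \in S)) => zS; rewrite ?orbT //.
  have zV : z \in V' by rewrite inE zS zG.
  by case: (cov z zV) => ->; rewrite ?orbT.
have I : (cls H0 p :|: S) :&: (cls H0 q :|: S) = [set v; w].
  rewrite -SE; apply/setP=> z; rewrite in_setI !in_setU.
  case: (boolP (z \in S)) => zS; rewrite ?orbT ?andbT //= !orbF.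
  apply/negP=> /andP [zp zq]; move: qp; by rewrite (cls_disj zp zq qV).
have all1 : forall f, coloring k (induced G (cls H0 p :|: S)) f -> f v = f w.
  move=> f cf; case: (eqVneq (f v) (f w)) => // ne; exfalso; apply: nBp.
  by exists f; split=> //; apply/eqP.
have all2 : forall f, coloring k (induced G (cls H0 q :|: S)) f -> f v <> f w.
  by move=> f cf E; apply: nAq; exists f.
have ex1 : exists f, coloring k (induced G (cls H0 p :|: S)) f.
  by case: Ap => f [cf _]; exists f.
have ex2 : exists f, coloring k (induced G (cls H0 q :|: S)) f.
  by case: Bq => f [cf _]; exists f.
exists (compo H0 p), (compo H0 q); split.
- move=> E; have : p \in (compo H0 q).1 by rewrite -E; exact: (@cls_self _ H0 p pV).
  by rewrite /= (negPf pq).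
- exact: (@comp_component _ H0 hH0 p pV).
- exact: (@comp_component _ H0 hH0 q qV).
- move=> H Hc.
  have ne : H0.1 != set0 by apply/set0Pn; exists p.
  have [x xV ->] := component_comp hH0 Hc ne.
  by case: (cov x xV) => h; [left|right]; rewrite /compo (cls_eq h).
- split.
  + by case: Ap => f [cf E]; exists f.
  + exact: all1.
  + exact: all2.
  + exact: part_b crit vw U I nvw ex1 all1 all2.
  + exact: part_c crit vw U I nvw all1 ex2 all2.
Qed.

End Main.

Theorem theorem8 (T : finType) (k : nat) (G : hg T) (S : {set T}) :
  2 <= k -> critical k G ->
  S \subset G.1 -> separating G S -> #|S| <= 2 ->
  exists v w : T,
    [/\ v != w, S = [set v; w], [set v; w] \notin G.2 &
      exists H1 H2 : hg T,
        [/\ H1 <> H2, component H1 (delete G S), component H2 (delete G S),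
            (forall H, component H (delete G S) -> H = H1 \/ H = H2) &
            let G1 := induced G (H1.1 :|: S) in
            let G2 := induced G (H2.1 :|: S) in
            [/\ exists phi1, coloring k G1 phi1 /\ phi1 v = phi1 w,
                (forall phi, coloring k G1 phi -> phi v = phi w),
                (forall phi, coloring k G2 phi -> phi v <> phi w),
                critical k (add_edge G1 v w) &
                critical k (identify G2 v w)]]].
Proof.
move=> hk crit SV [X1 [X2 [X1V [X2V [U [I [EG [c1 c2]]]]]]]] cS.
have hG : hypergraph G by case: crit.
have Esp : forall e, e \in G.2 -> e \subset X1 \/ e \subset X2.
  by move=> e; rewrite EG in_setU => /orP []; rewrite inE => /andP [_ h]; [left|right].
have [a aX aS] : exists2 a, a \in X1 & a \notin S.
  case: (boolP (X1 \subset S)) => [/subset_leq_card h|/subsetPn //].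
  by rewrite ltnNge h in c1.
have [b bX bS] : exists2 b, b \in X2 & b \notin S.
  case: (boolP (X2 \subset S)) => [/subset_leq_card h|/subsetPn //].
  by rewrite ltnNge h in c2.
have nb1 : b \notin X1.
  by apply/negP=> b1; move: bS; rewrite -I inE b1 bX.
have na2 : a \notin X2.
  by apply/negP=> a2; move: aS; rewrite -I inE a2 aX.
have [f1 cf1] : colorable k (induced G X1).
  apply: (crit_proper crit); apply: induced_proper => //.
  by apply/eqP=> E; move: nb1; rewrite E (subsetP X2V).
have [f2 cf2] : colorable k (induced G X2).
  apply: (crit_proper crit); apply: induced_proper => //.
  by apply/eqP=> E; move: na2; rewrite E (subsetP X1V).
have : #|S| = 0 \/ #|S| = 1 \/ #|S| = 2 by lia.
case=> [/eqP|[/eqP|/eqP]].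
- rewrite cards_eq0 => /eqP S0; exfalso; apply: (crit_nonc crit).
  apply: (glue U Esp cf1 cf2 (s := id)) => //.

  move=> x x1 x2; have : x \in X1 :&: X2 by rewrite inE x1 x2.
  by rewrite I S0 inE.
- case/cards1P => s S1; exfalso; apply: (crit_nonc crit).
  have sI : s \in X1 :&: X2 by rewrite I S1 inE.
  move: (sI); rewrite inE => /andP [s1 s2].
  have [r1 _] := cf1; have [r2 _] := cf2.
  have [sg [si sr E1 _]] := perm_exists (r2 s s2) (r2 s s2) (r1 s s1) (r1 s s1) (etrans (eqxx (f2 s)) (esym (eqxx (f1 s)))).
  apply: (glue U Esp cf1 cf2 si sr).
  move=> x x1 x2; have : x \in X1 :&: X2 by rewrite inE x1 x2.
  by rewrite I S1 inE => /eqP ->.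
case/cards2P => v [w [vw SE]].
have I' : X1 :&: X2 = [set v; w] by rewrite I.
have nvw : [set v; w] \notin G.2.
  apply/negP=> vwE.
  have sX1 : [set v; w] \subset X1 by rewrite -SE -I subsetIl.
  have sX2 : [set v; w] \subset X2 by rewrite -SE -I subsetIr.
  have d1 := @edge2 _ _ _ _ v w cf1; have d2 := @edge2 _ _ _ _ v w cf2.
  apply: (noglue crit U I' Esp cf1 cf2).
  by rewrite (negPf (d1 _)) ?(negPf (d2 _)) // inE vwE.
exists v, w; split=> //.
have aV : a \in G.1 :\: S by rewrite inE aS (subsetP X1V).
have bV : b \in G.1 :\: S by rewrite inE bS (subsetP X2V).
have clX : forall x y, x \in X1 :\: S -> adj (delete G S) x y -> y \in X1 :\: S.
  move=> x y; rewrite inE => /andP [xS x1] /adjP [e eE [xe ye _ yV]].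
  move: yV; rewrite inE => /andP [yS _]; rewrite inE yS /=.
  case: (Esp e eE) => se; first exact: (subsetP se).
  by move: xS; rewrite -I inE x1 (subsetP se).
have ba : b \notin cls (delete G S) a.
  apply/negP; rewrite inE => /andP [_ ab].
  have := closed_conn clX ab; rewrite inE aS aX => /(_ isT).
  by rewrite inE (negPf nb1) andbF.
have cov := cls_cover crit SV SE aV bV ba.
have [ABa Aa Ba Ea _] := cls_AB crit SV SE aV bV ba.
have sba := cls_sub2 SV bV ba.
have eq2 : G.1 :\: cls (delete G S) a = cls (delete G S) b :|: S.
  apply/eqP; rewrite eqEsubset sba andbT; apply/subsetP=> z; rewrite inE => /andP [za zG].
  rewrite in_setU; case: (boolP (z \in S)) => zS; rewrite ?orbT //= orbF.
  have zV : z \in G.1 :\: S by rewrite inE zS zG.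
  by case: (cov z zV) => // h; rewrite h in za.
rewrite eq2 in Aa Ba.
have ab : a \notin cls (delete G S) b.
  apply/negP=> ab; move: ba; rewrite (cls_eq ab) (@cls_self _ (delete G S) b bV) //.
case: ABa => h.
  apply: (finish crit SV SE vw nvw aV bV ba (cov)) => //.
  - by move=> hB; apply: Ea.
  - exact: (proj1 Aa h).
  - by move=> hA; apply: Ea; split=> //; apply: (proj2 Ba hA).
apply: (finish crit SV SE vw nvw bV aV ab) => //.
- by move=> z zV; case: (cov z zV) => ?; [right|left].
- exact: (proj1 Ba h).
- by move=> hB; apply: Ea; split=> //; apply: (proj2 Aa hB).
- by move=> hA; apply: Ea.
Qed.
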